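(* Let $k \ge 2$ be an integer, let $\Pi$ be a $(k-1)\times k$ real matrix whose rows form an orthonormal basis of the orthogonal complement of the all-ones vector in $\mathbb{R}^k$, let $B$ be the $k \times \binom{k}{2}$ matrix whose columns are the vectors $e_i - e_j$ for all pairs $i<j$, and let $G = \Pi B / \sqrt{k}$. Then: (a) every column of $G$ has Euclidean norm $\sqrt{2/k}$; (b) $G G^T = I_{k-1}$; (c) for every real $\binom{k}{2}\times\binom{k}{2}$ diagonal matrix $D$, \[ \| G D G^T \| \geq \frac{1}{k}\sqrt{\frac{2}{k-1}}\, \|D\|_F, \] where $\|\cdot\|$ is the operator norm and $\|D\|_F$ is the Frobenius norm. *)

(* Defs.v *)
From HB Require Import structures.
From mathcomp Require Import all_boot all_order all_algebra.
From mathcomp Require Import all_classical all_reals.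
Set Implicit Arguments. Unset Strict Implicit. Unset Printing Implicit Defensive.
Import Order.TTheory GRing.Theory Num.Theory.
Local Open Scope ring_scope.
Local Open Scope classical_set_scope.

Definition pairs (k : nat) := {p : 'I_k * 'I_k | (p.1 < p.2)%N}.

Definition npairs (k : nat) : nat := #|{: pairs k}|.

Definition Bmx (R : ringType) (k : nat) : 'M[R]_(k, npairs k) :=
  \matrix_(i < k, c < npairs k)
    let p := val (enum_val (c : 'I_#|{: pairs k}|)) in
    ((i == p.1)%:R - (i == p.2)%:R).

Definition vnorm (R : rcfType) (n : nat) (x : 'cV[R]_n) : R :=
  Num.sqrt (\sum_i x i 0 ^+ 2).

Definition frob (R : rcfType) (m n : nat) (A : 'M[R]_(m, n)) : R :=
  Num.sqrt (\sum_i \sum_j A i j ^+ 2).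

Definition opnorm (R : realType) (m n : nat) (A : 'M[R]_(m, n)) : R :=
  sup [set vnorm (A *m x) | x in [set x : 'cV[R]_n | vnorm x <= 1]].

(* Main.v *)
Require Import Defs.
From HB Require Import structures.
From mathcomp Require Import all_boot all_order all_algebra.
From mathcomp Require Import all_classical all_reals.
From mathcomp Require Import ring lra zify.
Import Order.TTheory GRing.Theory Num.Theory.
Local Open Scope ring_scope.

Section Helpers.
Variable R : comNzRingType.

Lemma sum_delta n (x : 'I_n) (F : 'I_n -> R) :
  \sum_i (i == x)%:R * F i = F x.
Proof.
rewrite (bigD1 x) //= eqxx mul1r big1 ?addr0 // => i /negbTE ->.
by rewrite mul0r.
Qed.

Lemma sum_delta1 n (x : 'I_n) : \sum_i (i == x)%:R = 1 :> R.
Proof. by rewrite (bigD1 x) //= eqxx big1 ?addr0 // => i /negbTE ->. Qed.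

Lemma bdot n (a b c d : 'I_n) :
  \sum_i (((i == a)%:R - (i == b)%:R) * ((i == c)%:R - (i == d)%:R) : R)
  = (a == c)%:R - (a == d)%:R - (b == c)%:R + (b == d)%:R.
Proof.
under eq_bigr do rewrite mulrBl !mulrBr.
rewrite !sumrB !sum_delta; ring.
Qed.

Lemma ndot n (a b c d : 'I_n) :
  \sum_i (((i == a)%:R + (i == b)%:R) * ((i == c)%:R + (i == d)%:R) : R)
  = (a == c)%:R + (a == d)%:R + (b == c)%:R + (b == d)%:R.
Proof.
under eq_bigr do rewrite mulrDl !mulrDr.
rewrite !big_split /= !sum_delta; ring.
Qed.

Lemma keyid n (a b c d : 'I_n) : (a < b)%N -> (c < d)%N ->
  ((a == c)%:R - (a == d)%:R - (b == c)%:R + (b == d)%:R) ^+ 2 =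
  2 * ((a == c) && (b == d))%:R +
  ((a == c)%:R + (a == d)%:R + (b == c)%:R + (b == d)%:R) :> R.
Proof.
move=> ab cd.
rewrite -!val_eqE /=.
move: ab cd; case: a => [a Ha]; case: b => [b Hb]; case: c => [c Hc]; case: d => [d Hd] /= ab cd.
case: (a =P c) => ?; case: (a =P d) => ?; case: (b =P c) => ?; case: (b =P d) => ? /=;
  try (exfalso; lia); ring.
Qed.

Lemma inner n (i a b : 'I_n) :
  \sum_j (((i == a)%:R - (j == a)%:R) * ((i == b)%:R - (j == b)%:R) : R) =
  n%:R * ((i == a)%:R * (i == b)%:R) - (i == a)%:R - (i == b)%:R + (a == b)%:R.
Proof.
under eq_bigr do rewrite mulrBl !mulrBr.
rewrite !sumrB sumr_const card_ord -mulr_sumr sum_delta1 sum_delta sum_delta.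
rewrite -mulr_natl; ring.
Qed.

Lemma outer n (a b : 'I_n) :
  \sum_i \sum_j (((i == a)%:R - (j == a)%:R) * ((i == b)%:R - (j == b)%:R) : R) =
  (n%:R * (a == b)%:R - 1) *+ 2.
Proof.
under eq_bigr do rewrite inner.
rewrite !big_split /= !sumrN -mulr_sumr !sum_delta !sum_delta1 sumr_const card_ord.
rewrite -mulr_natl; ring.
Qed.
End Helpers.

Section Pairs.
Variable R : comNzRingType.

Lemma sum_pairs k (F : 'I_k * 'I_k -> R) :
  \sum_(c < npairs k) F (val (enum_val (c : 'I_#|{: pairs k}|)))
  = \sum_(p : 'I_k * 'I_k | (p.1 < p.2)%N) F p.
Proof.
rewrite /npairs -(big_enum_val (fun x : pairs k => F (val x))) /=.
rewrite (reindex_omap (val : pairs k -> _) insub); last first.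
  by move=> i Pi; rewrite insubT.
by apply: eq_bigl=> -[i iA]/=; rewrite insubT ?iA /= eqxx.
Qed.

Lemma sum_sym k (F : 'I_k * 'I_k -> R) :
  (forall i j, F (i, j) = F (j, i)) -> (forall i, F (i, i) = 0) ->
  (\sum_(p : 'I_k * 'I_k | (p.1 < p.2)%N) F p) *+ 2 = \sum_i \sum_j F (i, j).
Proof.
move=> Fs F0.
rewrite (pair_bigA _ (fun i j => F (i, j))) /=.
rewrite [RHS](bigID (fun p : 'I_k * 'I_k => (p.1 < p.2)%N)) /= mulr2n.
congr (_ + _); first by apply: eq_bigr => -[].
have swi : injective (fun p : 'I_k * 'I_k => (p.2, p.1)).
  by move=> [a b] [c d] /= [-> ->].
rewrite big_mkcond [RHS]big_mkcond (reindex_inj swi).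
apply: eq_bigr => -[i j] _ /=.
case: (ltngtP i j) => [ij|ji|ij] //=.

- by have -> : i = j by apply: val_inj.
Qed.

End Pairs.

Section Norms.
Variable R : realType.

Lemma vnorm_delta n (b : 'I_n) : vnorm (delta_mx b 0 : 'cV[R]_n) = 1.
Proof.
rewrite /vnorm -[RHS]sqrtr1; congr (Num.sqrt _).
under eq_bigr do rewrite mxE eqxx andbT expr2.
by rewrite sum_delta eqxx.
Qed.

Lemma opnorm_ge m n (A : 'M[R]_(m, n)) (b : 'I_n) : vnorm (col b A) <= opnorm A.
Proof.
rewrite /opnorm.
have hb : has_ubound [set vnorm (A *m x) | x in [set x : 'cV[R]_n | vnorm x <= 1]].
  exists (Num.sqrt (\sum_i (\sum_j `|A i j|) ^+ 2)).
  move=> y [x /= hx <-].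
  have hx1 : forall j, `|x j 0| <= 1.
    move=> j.
    have hS : \sum_i x i 0 ^+ 2 <= 1.
      by move: hx; rewrite /vnorm -{1}sqrtr1 ler_sqrt.
    have hj : x j 0 ^+ 2 <= \sum_i x i 0 ^+ 2.
      rewrite (bigD1 j) //= lerDl; apply: sumr_ge0 => i _; exact: sqr_ge0.
    have hn : 0 <= `|x j 0| by [].
    have e : `|x j 0| ^+ 2 = x j 0 ^+ 2 by rewrite real_normK ?num_real.
    have h1 : `|x j 0| ^+ 2 <= 1 by rewrite e; exact: le_trans hj hS.
    move: h1 hn; set t := `|x j 0|; rewrite expr2 => h1 hn; nra.
  rewrite /vnorm ler_sqrt; last by apply: sumr_ge0 => i _; exact: sqr_ge0.
  apply: ler_sum => i _; rewrite mxE.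
  set y0 := \sum_j _; set z := \sum_j _.
  have hz : `|y0| <= z.
    apply: le_trans (ler_norm_sum _ _ _) _; apply: ler_sum => j _.
    rewrite normrM; apply: ler_piMr => //.
  move: hz; rewrite ler_norml => /andP [h1 h2].
  rewrite !expr2; nra.
apply: (ub_le_sup hb); exists (delta_mx b 0).
  by rewrite /= vnorm_delta.
by rewrite colE.
Qed.

Lemma frob_diag n (d : 'rV[R]_n) : frob (diag_mx d) = Num.sqrt (\sum_c d 0 c ^+ 2).
Proof.
rewrite /frob; congr (Num.sqrt _); apply: eq_bigr => i _.
rewrite (bigD1 i) //= big1 ?addr0; first by rewrite mxE eqxx mulr1n.
by move=> j /negbTE ji; rewrite mxE eq_sym ji mulr0n expr2 mul0r.
Qed.

End Norms.

Section Main.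
Variables (R : realType) (k : nat).
Hypothesis hk : (2 <= k)%N.
Variable Pi : 'M[R]_(k.-1, k).
Hypothesis hPi_on : Pi *m Pi^T = 1%:M.
Hypothesis hPi_span : (Pi == kermx (const_mx 1 : 'M[R]_(k, 1)))%MS.

Local Notation B := (Bmx R k).
Local Notation pr c := (val (enum_val (c : 'I_#|{: pairs k}|))).

Lemma BE i c : B i c = (i == (pr c).1)%:R - (i == (pr c).2)%:R.
Proof. by rewrite mxE. Qed.

Lemma Bt1 : B^T *m (const_mx 1 : 'M[R]_(k, 1)) = 0.
Proof.
apply/matrixP => c j; rewrite !mxE.
under eq_bigr do rewrite !mxE mulr1.
by rewrite sumrB !sum_delta1 subrr.
Qed.

Lemma BtPi : B^T *m Pi^T *m Pi = B^T.
Proof.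
have : (B^T <= Pi)%MS.
  apply: submx_trans (_ : (B^T <= kermx (const_mx 1 : 'M[R]_(k, 1)))%MS) _.
    by apply/sub_kermxP; exact: Bt1.
  by case/andP: hPi_span.
case/submxP => W ->.
by rewrite -[W *m Pi *m Pi^T]mulmxA hPi_on mulmx1.
Qed.

Lemma PiJ : Pi *m (const_mx 1 : 'M[R]_(k, 1)) = 0.
Proof. by apply/sub_kermxP; case/andP: hPi_span. Qed.

Lemma PiJk : Pi *m (const_mx 1 : 'M[R]_(k, k)) = 0.
Proof.
apply/matrixP => a b; have := congr1 (fun M : 'M[R]_(k.-1, 1) => M a 0) PiJ.
by rewrite !mxE => h; rewrite -[RHS]h; apply: eq_bigr => i _; rewrite !mxE.
Qed.

Lemma BtB c c' : (B^T *m B) c c' =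
  ((pr c).1 == (pr c').1)%:R - ((pr c).1 == (pr c').2)%:R
  - ((pr c).2 == (pr c').1)%:R + ((pr c).2 == (pr c').2)%:R.
Proof.
rewrite !mxE -bdot; apply: eq_bigr => i _; by rewrite !mxE.
Qed.

Lemma BBt : B *m B^T = k%:R *: 1%:M - const_mx 1.
Proof.
apply/matrixP => a b; rewrite !mxE.
pose F (p : 'I_k * 'I_k) : R :=
  ((p.1 == a)%:R - (p.2 == a)%:R) * ((p.1 == b)%:R - (p.2 == b)%:R).
transitivity (\sum_(c < npairs k) F (pr c)).
  by apply: eq_bigr => c _; rewrite !mxE /F ![a == _]eq_sym ![b == _]eq_sym.
rewrite sum_pairs.
have h2 : (\sum_(p : 'I_k * 'I_k | (p.1 < p.2)%N) F p) *+ 2 =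
   (k%:R * (a == b)%:R - 1) *+ 2.
  rewrite sum_sym; last first.
  - by move=> i; rewrite /F subrr mul0r.
  - by move=> i j; rewrite /F /=; ring.
  exact: outer.
move: h2; rewrite !mulr2n; lra.
Qed.

Local Notation s := (Num.sqrt (k%:R : R))^-1.
Local Notation G := (s *: (Pi *m B)).

Lemma trZ m n (a : R) (A : 'M[R]_(m, n)) : (a *: A)^T = a *: A^T.
Proof. by apply/matrixP => i j; rewrite !mxE. Qed.

Lemma s2 : s ^+ 2 = k%:R^-1.
Proof. by rewrite exprVn sqr_sqrtr ?ler0n. Qed.

Lemma kpos : (0 : R) < k%:R.
Proof. by rewrite ltr0n; apply: leq_trans hk. Qed.

Lemma GGt : G *m G^T = 1%:M.
Proof.
rewrite trZ trmx_mul -scalemxAl -scalemxAr scalerA -expr2 s2.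
rewrite mulmxA -(mulmxA Pi) BBt mulmxBr -scalemxAr mulmx1 PiJk subr0.
rewrite -scalemxAl hPi_on scalerA mulVf ?scale1r //.
by rewrite gt_eqF // kpos.
Qed.

Lemma GtG : G^T *m G = s ^+ 2 *: (B^T *m B).
Proof.
rewrite trZ trmx_mul -scalemxAl -scalemxAr scalerA -expr2.
by rewrite mulmxA BtPi.
Qed.

Lemma prlt c : ((pr c).1 < (pr c).2)%N.
Proof. exact: (valP (enum_val (c : 'I_#|{: pairs k}|))). Qed.

Lemma partA : forall c : 'I_(npairs k), vnorm (col c G) = Num.sqrt (2 / k%:R).
Proof.
move=> c; rewrite /vnorm.
have -> : \sum_i col c G i 0 ^+ 2 = (G^T *m G) c c.
  by rewrite [RHS]mxE; apply: eq_bigr => i _; rewrite !mxE expr2.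
rewrite GtG mxE BtB s2.
have hne : ((pr c).1 == (pr c).2) = false.
  by rewrite -val_eqE /= ltn_eqF // prlt.
rewrite hne eq_sym hne !eqxx subr0 [_ / _]mulrC; congr (Num.sqrt _); rewrite /=; ring.
Qed.

Lemma Mab (d : 'rV[R]_(npairs k)) a b :
  (G *m diag_mx d *m G^T) a b = \sum_c G a c * d 0 c * G b c.
Proof. by rewrite mul_mx_diag mxE; apply: eq_bigr => c _; rewrite !mxE. Qed.

Lemma sumsq (d : 'rV[R]_(npairs k)) :
  \sum_b \sum_a ((G *m diag_mx d *m G^T) a b) ^+ 2 =
  \sum_c \sum_c' d 0 c * d 0 c' * (G^T *m G) c c' ^+ 2.
Proof.
transitivity (\sum_(b < k.-1) \sum_(a < k.-1) \sum_(c < npairs k) \sum_(c' < npairs k)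
   (G a c * d 0 c * G b c) * (G a c' * d 0 c' * G b c')).
  apply: eq_bigr => b _; apply: eq_bigr => a _.
  by rewrite Mab expr2 big_distrlr.
under eq_bigr do rewrite exchange_big.
under eq_bigr do under eq_bigr do rewrite exchange_big.
rewrite exchange_big /=.
under eq_bigr do rewrite exchange_big.
apply: eq_bigr => c _; apply: eq_bigr => c' _.
have hH : (G^T *m G) c c' = \sum_i G i c * G i c'.
  by rewrite mxE; apply: eq_bigr => i _; rewrite mxE.
rewrite hH expr2 big_distrlr /= mulr_sumr.
apply: eq_bigr => b _; rewrite mulr_sumr; apply: eq_bigr => a _.
rewrite !mxE; ring.
Qed.

Local Notation Nv i c := ((i == (pr c).1)%:R + (i == (pr c).2)%:R : R).

Lemma ceq (c c' : 'I_(npairs k)) :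
  (((pr c).1 == (pr c').1) && ((pr c).2 == (pr c').2)) = (c == c').
Proof.
apply/idP/idP.
  case/andP => /eqP h1 /eqP h2; apply/eqP; apply: enum_val_inj; apply: val_inj.
  move: h1 h2; case: (val (enum_val _)) => x y; case: (val (enum_val _)) => z w.
  by move=> /= -> ->.
by move/eqP ->; rewrite !eqxx.
Qed.

Lemma Hsq c c' : (G^T *m G) c c' ^+ 2 =
  s ^+ 4 * (2 * (c' == c)%:R + \sum_i Nv i c * Nv i c').
Proof.
rewrite GtG mxE BtB exprMn -exprM keyid ?prlt // ceq eq_sym.
by rewrite ndot.
Qed.

Lemma lowerb (d : 'rV[R]_(npairs k)) :
  s ^+ 4 * 2 * \sum_c d 0 c ^+ 2 <=
  \sum_c \sum_c' d 0 c * d 0 c' * (G^T *m G) c c' ^+ 2.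
Proof.
have e : forall c c', d 0 c * d 0 c' * (G^T *m G) c c' ^+ 2 =
   s ^+ 4 * 2 * ((c' == c)%:R * (d 0 c * d 0 c')) +
   s ^+ 4 * (d 0 c * d 0 c' * \sum_i Nv i c * Nv i c').
  by move=> c c'; rewrite Hsq; ring.
rewrite (eq_bigr _ (fun c _ => eq_bigr _ (fun c' _ => e c c'))).
under eq_bigr do rewrite big_split /= -mulr_sumr sum_delta.
rewrite big_split /= -mulr_sumr lerDl.
have -> : \sum_c \sum_c' s ^+ 4 * (d 0 c * d 0 c' * \sum_i Nv i c * Nv i c') =
   s ^+ 4 * \sum_i (\sum_c d 0 c * Nv i c) ^+ 2.
  transitivity (s ^+ 4 * \sum_c \sum_c' (d 0 c * d 0 c' * \sum_i Nv i c * Nv i c')).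
    by rewrite mulr_sumr; apply: eq_bigr => c _; rewrite mulr_sumr.
  congr (_ * _); symmetry.
  under eq_bigr do rewrite expr2 big_distrlr /=.
  rewrite exchange_big /=; apply: eq_bigr => c _.
  rewrite exchange_big /=; apply: eq_bigr => c' _.
  rewrite mulr_sumr; apply: eq_bigr => i _; ring.
apply: mulr_ge0; first by rewrite exprn_ge0 // invr_ge0 sqrtr_ge0.
by apply: sumr_ge0 => i _; exact: sqr_ge0.
Qed.

Lemma partC (d : 'rV[R]_(npairs k)) :
  k%:R^-1 * Num.sqrt (2 / (k%:R - 1)) * frob (diag_mx d) <=
  opnorm (G *m diag_mx d *m G^T).
Proof.
set M := G *m diag_mx d *m G^T.
rewrite frob_diag.
set Sd := \sum_c d 0 c ^+ 2.
set K : R := k%:R.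
have hK : 1 < K by rewrite /K ltr1n.
have hSd : 0 <= Sd by apply: sumr_ge0 => c _; exact: sqr_ge0.
set L := K^-1 * Num.sqrt (2 / (K - 1)) * Num.sqrt Sd.
have hL0 : 0 <= L.
  by rewrite /L !mulr_ge0 ?sqrtr_ge0 // invr_ge0; lra.
have hL2 : L ^+ 2 = 2 / (K ^+ 2 * (K - 1)) * Sd.
  rewrite /L !exprMn !sqr_sqrtr //; last by apply: divr_ge0; lra.
  field; apply/andP; split; apply/eqP; lra.
have hs4 : s ^+ 4 = K^-1 ^+ 2 by rewrite -s2 -exprM.
have hsum := lowerb d; rewrite -sumsq -/M hs4 in hsum.
have [b hb] : exists b : 'I_k.-1, L ^+ 2 <= \sum_a M a b ^+ 2.
  case/boolP: [exists b : 'I_k.-1, L ^+ 2 <= \sum_a M a b ^+ 2].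
    by case/existsP => b hb; exists b.
  rewrite negb_exists => /forallP hall; exfalso.
  have hlt : \sum_(b < k.-1) \sum_a M a b ^+ 2 < \sum_(b < k.-1) L ^+ 2.
    apply: ltr_sum.
      have h0 : (0 < k.-1)%N by rewrite -ltnS prednK // (leq_trans _ hk).
      by apply/hasP; exists (Ordinal h0); first by rewrite mem_index_enum.
    by move=> b _; rewrite ltNge; exact: hall.
  have hk1 : (k.-1)%:R = K - 1 :> R.
    by rewrite -subn1 natrB // (leq_trans _ hk).
  move: hlt; rewrite sumr_const card_ord -mulr_natl hk1 hL2 => hlt.
  have : 2 / (K ^+ 2 * (K - 1)) * Sd * (K - 1) = K^-1 ^+ 2 * 2 * Sd.
    field; apply/andP; split; apply/eqP; lra.
  move=> heq; move: hsum hlt heq; rewrite -/Sd; nra.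
apply: (le_trans _ (@opnorm_ge R _ _ M b)).
rewrite /vnorm -(ger0_norm hL0) -sqrtr_sqr ler_sqrt; last first.
  by apply: sumr_ge0 => i _; exact: sqr_ge0.
apply: (le_trans hb); apply: ler_sum => a _; by rewrite [col _ _ _ _]mxE.
Qed.

End Main.

Theorem lemma10 (R : realType) (k : nat) (hk : (2 <= k)%N)
  (Pi : 'M[R]_(k.-1, k))
  (hPi_on : Pi *m Pi^T = 1%:M)
  (hPi_span : (Pi == kermx (const_mx 1 : 'M[R]_(k, 1)))%MS) :
  let G := (Num.sqrt (k%:R : R))^-1 *: (Pi *m Bmx R k) in
  [/\ (forall c : 'I_(npairs k), vnorm (col c G) = Num.sqrt (2 / k%:R)),
      G *m G^T = 1%:M
    & forall d : 'rV[R]_(npairs k),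
        opnorm (G *m diag_mx d *m G^T)
          >= k%:R^-1 * Num.sqrt (2 / (k%:R - 1)) * frob (diag_mx d)].
Proof.
move=> G; split.
- exact: partA.
- exact: GGt.
- move=> d; exact: partC.
Qed.
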